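(* Let $\varepsilon>0$, $\mu\in\mathcal P(\Omega^n)$ and let $\vec V$ be a partition of $[n]$. If $\mu$ fails to be $\varepsilon$-regular with respect to $\vec V$, then there is a partition $\vec W$ of $[n]$ refining $\vec V$ such that $\#\vec W\le2\#\vec V$ and $\mathrm{ind}_\mu(\vec W)\le\mathrm{ind}_\mu(\vec V)-\varepsilon^4/(4|\Omega|^3)$.
   Context: $\Omega$ is a finite nonempty set, $\mathcal P(\Omega^n)$ the set of probability measures on $\Omega^n$, $\|\cdot\|_{TV}$ total variation. For $\sigma\in\Omega^n$, nonempty $S\subset[n]$ and $\omega\in\Omega$ let $\sigma[\omega|S]=|\sigma^{-1}(\omega)\cap S|/|S|$ and $\sigma[\omega|x]=\mathbf 1\{\sigma(x)=\omega\}$; $\langle X(\boldsymbol\sigma)\rangle_\mu=\sum_\sigma\mu(\sigma)X(\sigma)$. For a partition $\vec V=(V_1,\dots,V_k)$ of $[n]$ (size $\#\vec V=k$), $\mathrm{ind}_\mu(\vec V)=\frac1{|\Omega|n}\sum_{\omega}\sum_{j}\sum_{x\in V_j}\langle(\boldsymbol\sigma[\omega|x]-\boldsymbol\sigma[\omega|V_j])^2\rangle_\mu$. $\mu$ is $\varepsilon$-regular on $U\subset[n]$ if for every $S\subset U$ with $|S|\ge\varepsilon|U|$, $\langle\|\boldsymbol\sigma[\cdot|S]-\boldsymbol\sigma[\cdot|U]\|_{TV}\rangle_\mu<\varepsilon$; $\mu$ is $\varepsilon$-regular with respect to $\vec V$ if there is $J\subset[\#\vec V]$ with $\sum_{i\notin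 J}|V_i|<\varepsilon n$ such that $\mu$ is $\varepsilon$-regular on $V_i$ for every $i\in J$. $\vec W$ refines $\vec V$ if each class of $\vec W$ lies in a class of $\vec V$. *)

(* Defs.v *)
From HB Require Import structures.
From mathcomp Require Import all_boot all_order all_algebra.
From mathcomp Require Import reals.
Set Implicit Arguments. Unset Strict Implicit. Unset Printing Implicit Defensive.
Import Order.TTheory GRing.Theory Num.Theory.
Local Open Scope ring_scope.

Section Defs.
Variables (R : realType) (Omega : finType) (n : nat).

Definition config := {ffun 'I_n -> Omega}.

Definition is_prob (mu : {ffun config -> R}) : Prop :=
  (forall s, 0 <= mu s) /\ \sum_(s : config) mu s = 1.

Definition expect (mu : {ffun config -> R}) (X : config -> R) : R :=
  \sum_(s : config) mu s * X s.

Definition frac (s : config) (w : Omega) (S : {set 'I_n}) : R :=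
  #|[set x in S | s x == w]|%:R / #|S|%:R.

Definition ind1 (s : config) (w : Omega) (x : 'I_n) : R :=
  (s x == w)%:R.

Definition tvdist (s : config) (S U : {set 'I_n}) : R :=
  2^-1 * \sum_(w : Omega) `|frac s w S - frac s w U|.

Definition index_of (mu : {ffun config -> R}) (P : {set {set 'I_n}}) : R :=
  (#|Omega|%:R * n%:R)^-1 *
  \sum_(w : Omega) \sum_(V in P) \sum_(x in V)
     expect mu (fun s => (ind1 s w x - frac s w V) ^+ 2).

Definition regular_on (mu : {ffun config -> R}) (eps : R) (U : {set 'I_n}) : Prop :=
  forall S : {set 'I_n}, S \subset U -> eps * #|U|%:R <= #|S|%:R ->
    expect mu (fun s => tvdist s S U) < eps.

Definition regular_wrt (mu : {ffun config -> R}) (eps : R) (P : {set {set 'I_n}}) : Prop :=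
  exists J : {set {set 'I_n}}, J \subset P /\
    \sum_(V in P :\: J) #|V|%:R < eps * n%:R /\
    (forall V, V \in J -> regular_on mu eps V).

Definition refines (W P : {set {set 'I_n}}) : Prop :=
  forall B, B \in W -> exists2 A, A \in P & B \subset A.

End Defs.

(* Main.v *)
From Pilot Require Import Defs.
From HB Require Import structures.
From mathcomp Require Import all_boot all_order all_algebra.
From mathcomp Require Import reals.
From mathcomp Require Import ring lra.
Import Pilot.Defs.
Import Order.TTheory GRing.Theory Num.Theory.
Local Open Scope ring_scope.

Lemma CS_ineq (R : realDomainType) (I : finType) (A : pred I) (a x : I -> R) :
  (forall i, 0 <= a i) ->
  (\sum_(i | A i) a i * x i) ^+ 2 <= (\sum_(i | A i) a i) * \sum_(i | A i) a i * x i ^+ 2.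
Proof.
move=> a0.
set X := _ * _. set Y := _ ^+ 2.
have E1 : X = \sum_(i | A i) \sum_(j | A j) a i * (a j * x j ^+ 2).
  by rewrite /X mulr_suml; apply: eq_bigr => i _; rewrite mulr_sumr.
have E2 : X = \sum_(i | A i) \sum_(j | A j) (a i * x i ^+ 2) * a j.
  by rewrite /X mulrC mulr_suml; apply: eq_bigr => i _; rewrite mulr_sumr.
have E3 : Y = \sum_(i | A i) \sum_(j | A j) (a i * x i) * (a j * x j).
  by rewrite /Y expr2 mulr_suml; apply: eq_bigr => i _; rewrite mulr_sumr.
have H : 0 <= (X - Y) + (X - Y).
  rewrite {1}E1 E2 E3 -!sumrB -big_split /=; apply: sumr_ge0 => i _.
  rewrite -!sumrB -big_split /=; apply: sumr_ge0 => j _.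
  have -> : a i * (a j * x j ^+ 2) - a i * x i * (a j * x j) +
    (a i * x i ^+ 2 * a j - a i * x i * (a j * x j)) = a i * a j * (x i - x j) ^+ 2 by ring.
  by rewrite mulr_ge0 ?sqr_ge0 // mulr_ge0.
lra.
Qed.

Lemma aux1 {R : realDomainType} {a b d x y : R} : x <= y -> b + d + y <= a -> x <= a - b - d.
Proof. move=> *; lra. Qed.
Lemma aux2 {R : realDomainType} {u v w k e : R} : k <= u - v -> k = w -> e <= w -> v <= u - e.
Proof. move=> *; lra. Qed.

Section Gen.
Set Implicit Arguments.
Variables (R : realType) (Omega : finType) (n : nat).

Lemma sum_ind (s : config Omega n) w (B : {set 'I_n}) :
  \sum_(x in B) (ind1 R s w x) = #|[set x in B | s x == w]|%:R.
Proof.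
rewrite /ind1 -natr_sum -sum1_card; congr (_%:R).
rewrite big_mkcond [RHS]big_mkcond /=; apply: eq_bigr => x _.
by rewrite inE; case: (x \in B); case: (s x == w).
Qed.

Lemma dec (s : config Omega n) w (B : {set 'I_n}) (c : R) :
  \sum_(x in B) (ind1 R s w x - c) ^+ 2 =
  \sum_(x in B) (ind1 R s w x - frac R s w B) ^+ 2 + #|B|%:R * (frac R s w B - c) ^+ 2.
Proof.
have [->|Bn0] := eqVneq B set0; first by rewrite !big_set0 cards0 mul0r addr0.
set m := frac R s w B.
have Hs : \sum_(x in B) (ind1 R s w x - m) = 0.
  rewrite sumrB sum_ind sumr_const /m /frac -[X in _ - X]mulr_natr divfK ?subrr //.
  by rewrite pnatr_eq0 cards_eq0.
rewrite (eq_bigr (fun x => (ind1 R s w x - m)^+2 + 2 * (m - c) * (ind1 R s w x - m) + (m-c)^+2)); last by move=> x _; ring.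
by rewrite !big_split /= -mulr_sumr Hs sumr_const mulr0 addr0 mulr_natl.
Qed.

Definition G (s : config Omega n) (B : {set 'I_n}) : R :=
  \sum_(w : Omega) \sum_(x in B) (ind1 R s w x - frac R s w B) ^+ 2.

Lemma G_split s (V S : {set 'I_n}) : S \subset V ->
  G s S + G s (V :\: S) + #|S|%:R * \sum_(w : Omega) (frac R s w S - frac R s w V) ^+ 2
  <= G s V.
Proof.
move=> SV; rewrite /G mulr_sumr -!big_split; apply: ler_sum => w _.
rewrite (@big_setID _ _ _ _ V S) (setIidPr SV) /= (dec s w S (frac R s w V)) (dec s w (V :\: S) (frac R s w V)).
have := mulr_ge0 (ler0n R #|V :\: S|) (sqr_ge0 (frac R s w (V :\: S) - frac R s w V)).
lra.
Qed.

Lemma tv_bound s (S V : {set 'I_n}) :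
  (2 * tvdist R s S V) ^+ 2 <= #|Omega|%:R * \sum_(w : Omega) (frac R s w S - frac R s w V) ^+ 2.
Proof.
have -> : 2 * tvdist R s S V = \sum_(w : Omega) 1 * `|frac R s w S - frac R s w V|.
  rewrite /tvdist mulrA mulfV ?mul1r ?pnatr_eq0 //.
  by apply: eq_bigr => w _; rewrite mul1r.
have H := @CS_ineq R Omega xpredT (fun _ => 1) (fun w => `|frac R s w S - frac R s w V|) (fun _ => @ler01 R).
apply: le_trans H _.
rewrite sumr_const le_eqVlt; apply/orP; left; apply/eqP; congr (_ * _).
by apply: eq_bigr => w _; rewrite mul1r real_normK // num_real.
Qed.

Definition g (mu : {ffun config Omega n -> R}) (B : {set 'I_n}) : R :=
  \sum_(s : config Omega n) mu s * G s B.

Lemma g_split (eps : R) mu (V S : {set 'I_n}) : (0 < #|Omega|)%N -> is_prob mu ->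
  S \subset V -> 0 <= eps -> eps <= expect mu (fun s => tvdist R s S V) ->
  g mu S + g mu (V :\: S) + #|S|%:R * (4 * eps ^+ 2 / #|Omega|%:R) <= g mu V.
Proof.
move=> Opos [mu0 mu1] SV e0 He.
pose T := V :\: S.
pose t := fun s : config Omega n => 2 * tvdist R s S V.
pose D := fun s => \sum_(w : Omega) (frac R s w S - frac R s w V) ^+ 2.
have h1 : g mu S + g mu T + \sum_s mu s * (#|S|%:R * D s) <= g mu V.
  rewrite /g -!big_split /=; apply: ler_sum => s _; rewrite -!mulrDr.
  by apply: ler_wpM2l => //; exact: G_split.
have O0 : 0 < #|Omega|%:R :> R by rewrite ltr0n.
have h2 : #|S|%:R / #|Omega|%:R * \sum_s mu s * t s ^+ 2 <= \sum_s mu s * (#|S|%:R * D s).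
  rewrite mulr_sumr; apply: ler_sum => s _.
  have Ht : #|Omega|%:R^-1 * t s ^+ 2 <= D s by rewrite ler_pdivrMl //; exact: tv_bound.
  have -> : #|S|%:R / #|Omega|%:R * (mu s * t s ^+ 2) =
    mu s * (#|S|%:R * (#|Omega|%:R^-1 * t s ^+ 2)) by ring.
  by apply: ler_wpM2l => //; apply: ler_wpM2l => //; exact: ler0n.
have h3 : (\sum_s mu s * t s) ^+ 2 <= \sum_s mu s * t s ^+ 2.
  by have := @CS_ineq R (config Omega n) xpredT mu t mu0; rewrite mu1 mul1r.
have h4 : \sum_s mu s * t s = 2 * expect mu (fun s => tvdist R s S V).
  by rewrite /expect mulr_sumr; apply: eq_bigr => s _; rewrite /t mulrCA.
have h5 : (2 * eps) ^+ 2 <= (\sum_s mu s * t s) ^+ 2.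
  by rewrite h4 !expr2; apply: ler_pM; lra.
have h6 : #|S|%:R / #|Omega|%:R * (2 * eps) ^+ 2 <= #|S|%:R / #|Omega|%:R * \sum_s mu s * t s ^+ 2.
  apply: ler_wpM2l; last exact: le_trans h5 h3.
  by apply: divr_ge0; exact: ler0n.
have -> : #|S|%:R * (4 * eps ^+ 2 / #|Omega|%:R) = #|S|%:R / #|Omega|%:R * (2 * eps) ^+ 2 by ring.
lra.
Qed.

Lemma index_g mu (Q : {set {set 'I_n}}) :
  index_of mu Q = (#|Omega|%:R * n%:R)^-1 * \sum_(V in Q) g mu V.
Proof.
rewrite /index_of /g; congr (_ * _); rewrite exchange_big; apply: eq_bigr => V _.
rewrite /expect.
under eq_bigr => w _ do rewrite exchange_big.
rewrite exchange_big; apply: eq_bigr => s _.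
rewrite /G mulr_sumr; apply: eq_bigr => w _; by rewrite mulr_sumr.
Qed.

Lemma tv_self (s : config Omega n) (V : {set 'I_n}) : tvdist R s V V = 0.
Proof.
rewrite /tvdist big1 ?mulr0 // => w _; by rewrite subrr normr0.
Qed.

Lemma disjP (T : finType) (A B : {set T}) :
  (forall x, x \in A -> x \in B -> False) -> [disjoint A & B].
Proof.
move=> H; rewrite disjoint_subset; apply/subsetP => x xA; rewrite inE.
by apply/negP => xB; exact: H x xA xB.
Qed.

Definition regb (eps : R) (mu : {ffun config Omega n -> R}) (V : {set 'I_n}) :=
  [forall X : {set 'I_n}, (X \subset V) ==> (eps * #|V|%:R <= #|X|%:R) ==>
     (expect mu (fun s => tvdist R s X V) < eps)].

Definition fsel (eps : R) (mu : {ffun config Omega n -> R}) (V : {set 'I_n}) : {set 'I_n} :=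
  if [pick X : {set 'I_n} | (X \subset V) && (eps * #|V|%:R <= #|X|%:R) &&
     ~~ (expect mu (fun s => tvdist R s X V) < eps)] is Some X then X else V.

Lemma fsel_spec (eps : R) (mu : {ffun config Omega n -> R}) V :
  (fsel eps mu V = V /\ regb eps mu V) \/
  [/\ fsel eps mu V \subset V, eps * #|V|%:R <= #|fsel eps mu V|%:R &
      eps <= expect mu (fun s => tvdist R s (fsel eps mu V) V)].
Proof.
rewrite /fsel; case: pickP => [S0 /andP[/andP[h1 h2] h3] | H]; [right | left].
  by split => //; rewrite leNgt.
split => //; apply/forallP => S0; apply/implyP => h1; apply/implyP => h2.
by have := H S0; rewrite h1 h2 /= => /negbFE.
Qed.

End Gen.

Theorem lemma2p7 (R : realType) (Omega : finType) (n : nat)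
    (eps : R) (mu : {ffun config Omega n -> R}) (P : {set {set 'I_n}}) :
  (0 < #|Omega|)%N -> (0 < n)%N -> 0 < eps ->
  is_prob mu ->
  partition P [set: 'I_n] ->
  ~ regular_wrt mu eps P ->
  exists W : {set {set 'I_n}},
    [/\ partition W [set: 'I_n], refines W P, (#|W| <= 2 * #|P|)%N &
        index_of mu W <= index_of mu P - eps ^+ 4 / (4 * #|Omega|%:R ^+ 3)].
Proof.
move=> Opos npos epos mup Hpart Hnr.
have /and3P[/eqP covP tP P0] := Hpart.
pose f := fsel R eps mu.
pose h := fun V => V :\: f V.
pose I := [set V in P | f V != V].
pose W := f @: P :|: h @: I.
have IP : I \subset P by apply/subsetP => V; rewrite inE => /andP[].
have same : forall V V' x, V \in P -> V' \in P -> x \in V -> x \in V' -> V = V'.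
  by move=> V V' x VP V'P xV xV'; rewrite -(def_pblock tP VP xV) (def_pblock tP V'P xV').
have Vne : forall V, V \in P -> V != set0.
  by move=> V VP; apply/negP => /eqP V0; rewrite -V0 VP in P0.
have F1 : forall V, V \in P -> f V \subset V.
  by move=> V VP; rewrite /f; case: (fsel_spec R eps mu V) => [[-> _] | [] //].
have F2 : forall V, V \in P -> f V != set0.
  move=> V VP; rewrite /f; case: (fsel_spec R eps mu V) => [[-> _] | [_ h2 _]]; first exact: Vne.
  rewrite -cards_eq0; apply/negP => /eqP c0; move: h2; rewrite c0.
  have : (0 < #|V|)%N by rewrite card_gt0 Vne.
  rewrite -(ltr0n R) => Vp; have := mulr_gt0 epos Vp; lra.
have F4 : forall V, V \in I -> eps * #|V|%:R <= #|f V|%:R /\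
    eps <= expect mu (fun s => tvdist R s (f V) V).
  move=> V; rewrite inE => /andP[VP fV].
  case: (fsel_spec R eps mu V) => [[fe _] | [_ h2 h3]]; last by split.
  by rewrite /f fe eqxx in fV.
have F5 : forall V, V \in P -> V \notin I -> f V = V /\ regb R eps mu V.
  move=> V VP; rewrite inE VP /= negbK => /eqP fe.
  case: (fsel_spec R eps mu V) => [// | [_ _ h3]].
  have E0 : expect mu (fun s => tvdist R s V V) = 0.
    by rewrite /expect big1 // => s _; rewrite (tv_self R) mulr0.
  by move: h3; rewrite /f in fe; rewrite fe E0 => e; have := lt_le_trans epos e; rewrite ltxx.
have F3 : forall V, V \in I -> h V != set0.
  move=> V VI; have := VI; rewrite inE => /andP[VP fV].
  rewrite /h setD_eq0; apply/negP => Vf; move/negP: fV; apply.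
  by rewrite eqEsubset F1.
have hsub : forall V, h V \subset V by move=> V; exact: subsetDl.
have parent : forall B, B \in W -> exists2 V, V \in P &
    (B = f V \/ (V \in I /\ B = h V)).
  move=> B; rewrite inE => /orP[/imsetP[V VP ->] | /imsetP[V VI ->]].
    by exists V => //; left.
  by exists V; [exact: (subsetP IP) | right].
have parsub : forall B V, V \in P -> (B = f V \/ (V \in I /\ B = h V)) -> B \subset V.
  by move=> B V VP [-> | [_ ->]]; [exact: F1 | exact: hsub].
have Bne : forall B, B \in W -> B != set0.
  move=> B /parent [V VP [-> | [VI ->]]]; [exact: F2 | exact: F3].
exists W; split.
- rewrite /partition; apply/and3P; split.
  + apply/eqP/setP => x; rewrite inE; apply/bigcupP.
    have xc : x \in cover P by rewrite covP inE.
    set V := pblock P x.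
    have VP : V \in P by exact: pblock_mem.
    have xV : x \in V by rewrite mem_pblock.
    case xf: (x \in f V).
      by exists (f V) => //; rewrite inE imset_f.
    have VI : V \in I.
      rewrite inE VP /=; apply/negP => /eqP fe; by rewrite fe xV in xf.
    exists (h V); first by rewrite inE orbC imset_f.
    by rewrite /h inE xf xV.
  + apply/trivIsetP => B B' BW B'W neq; apply: disjP => x xB xB'.
    have [V VP HV] := parent B BW; have [V' V'P HV'] := parent B' B'W.
    have e := same V V' x VP V'P (subsetP (parsub _ _ VP HV) x xB) (subsetP (parsub _ _ V'P HV') x xB').
    subst V'; move/negP: neq; apply.
    case: HV => [eB | [_ eB]]; case: HV' => [eB' | [_ eB']]; rewrite eB eB' ?eqxx //.
    * by move: xB'; rewrite eB' /h inE -eB xB.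
    * by move: xB; rewrite eB /h inE -eB' xB'.
  + apply/negP => W0; have := Bne _ W0; by rewrite eqxx.
- move=> B /parent [V VP HV]; exists V => //; exact: parsub HV.
- rewrite cardsU; apply: leq_trans (leq_subr _ _) _.
  rewrite mul2n -addnn; apply: leq_add; first exact: leq_imset_card.
  exact: leq_trans (leq_imset_card _ _) (subset_leq_card IP).
have finj : {in P &, injective f}.
  move=> V V' VP V'P e; have /set0Pn [x xf] := F2 V VP.
  apply: (same V V' x VP V'P); first exact: (subsetP (F1 V VP)).
  by rewrite e in xf; exact: (subsetP (F1 V' V'P)).
have hinj : {in I &, injective h}.
  move=> V V' VI V'I e; have /set0Pn [x xf] := F3 V VI.
  apply: (same V V' x (subsetP IP V VI) (subsetP IP V' V'I)); first exact: (subsetP (hsub V)).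
  by rewrite e in xf; exact: (subsetP (hsub V')).
have dis : [disjoint f @: P & h @: I].
  apply: disjP => B /imsetP[V VP ->] /imsetP[V' V'I e].
  have /set0Pn [x xf] := F2 V VP.
  have V'P := subsetP IP V' V'I.
  have xh : x \in h V' by rewrite -e.
  have ee := same V V' x VP V'P (subsetP (F1 V VP) x xf) (subsetP (hsub V') x xh).
  subst V'; by move: xh; rewrite /h inE xf.
have sumW : \sum_(B in W) g R mu B = \sum_(V in P) g R mu (f V) + \sum_(V in I) g R mu (h V).
  rewrite (eq_bigl [predU f @: P & h @: I]); last by move=> B; rewrite !inE.
  by rewrite bigU //= !big_imset.
have PI : P :&: I = I by apply/setIidPr.
have sumP1 : \sum_(V in P) g R mu (f V) = \sum_(V in I) g R mu (f V) + \sum_(V in P :\: I) g R mu V.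
  rewrite (big_setID (A := P) I) PI; congr (_ + _); apply: eq_bigr => V.
  by rewrite inE => /andP[VnI VP]; have [-> _] := F5 V VP VnI.
have sumP2 : \sum_(V in P) g R mu V = \sum_(V in I) g R mu V + \sum_(V in P :\: I) g R mu V.
  by rewrite (big_setID (A := P) I) PI.
pose c := 4 * eps ^+ 2 / #|Omega|%:R.
have c0 : 0 <= c by apply: divr_ge0; [apply: mulr_ge0; [lra | exact: sqr_ge0] | exact: ler0n].
have key : \sum_(V in I) (eps * c) * #|V|%:R <=
    \sum_(V in P) g R mu V - \sum_(B in W) g R mu B.
  rewrite sumW sumP1 sumP2.
  have -> : forall a b d e : R, a + b - (d + b + e) = a - d - e by move=> *; ring.
  rewrite -!sumrB; apply: ler_sum => V VI.
  have [h1 h2] := F4 V VI.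
  have := @g_split R Omega n eps mu V (f V) Opos mup (F1 V (subsetP IP V VI)) (ltW epos) h2.
  rewrite -/c => hg.
  have hh : (eps * #|V|%:R) * c <= #|f V|%:R * c by apply: ler_wpM2r.
  rewrite (mulrAC eps c); apply: (aux1 hh); exact: hg.
have reg : eps * n%:R <= \sum_(V in I) #|V|%:R.
  rewrite leNgt; apply/negP => H; apply: Hnr.
  exists (P :\: I); split; first exact: subsetDl.
  split; first by rewrite setDDr setDv set0U PI.
  move=> V; rewrite inE => /andP[VnI VP]; have [_ /forallP rb] := F5 V VP VnI.
  move=> S SV Sc; by move: (rb S); rewrite SV Sc.
rewrite -mulr_sumr in key.
have N0 : 0 < n%:R :> R by rewrite ltr0n.
have O0 : 0 < #|Omega|%:R :> R by rewrite ltr0n.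
have O1 : 1 <= #|Omega|%:R :> R by rewrite ler1n.
set SP := \sum_(V in P) g R mu V in key *.
set SW := \sum_(B in W) g R mu B in key *.
rewrite !(index_g R) -/SP -/SW.
set C := (#|Omega|%:R * n%:R)^-1.
have C0 : 0 <= C by rewrite invr_ge0 mulr_ge0 // ltW.
have k2 : eps * c * (eps * n%:R) <= SP - SW.
  apply: le_trans key; apply: ler_wpM2l => //; apply: mulr_ge0 => //; exact: ltW.
have k3 : C * (eps * c * (eps * n%:R)) <= C * (SP - SW) by apply: ler_wpM2l.
have k4 : C * (eps * c * (eps * n%:R)) = eps ^+ 4 / #|Omega|%:R ^+ 2 * 4.
  rewrite /C /c; field; apply/andP; split; rewrite gt_eqF //.
have k5 : eps ^+ 4 / (4 * #|Omega|%:R ^+ 3) <= eps ^+ 4 / #|Omega|%:R ^+ 2 * 4.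
  have -> : eps ^+ 4 / (4 * #|Omega|%:R ^+ 3) = eps ^+ 4 / #|Omega|%:R ^+ 2 * (4 * #|Omega|%:R)^-1.
    by field; rewrite gt_eqF.
  apply: ler_wpM2l; first by apply: divr_ge0; [exact: exprn_ge0 (ltW epos) | exact: exprn_ge0 (ltW O0)].
  apply: le_trans (_ : 1 <= 4); last lra.
  rewrite invf_le1; lra.
rewrite mulrBr in k3; exact: (aux2 k3 k4 k5).
Qed.
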